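(* Let $M=p_1^{n_1}\cdots p_K^{n_K}$ with distinct primes and $n_\nu\in\mathbb{N}$, and let $A\oplus B=\mathbb{Z}_M$. Then every fiber $Z=x*F_i$ ($x\in\mathbb{Z}_M$, $i\in\{1,\dots,K\}$) splits with parity $(A,B)$ or with parity $(B,A)$. In particular, for any $a\in\Sigma_A(Z)$ and $b\in\Sigma_B(Z)$ we have $\Sigma_A(Z)\subset\Pi(a,p_i^{n_i-1})$ and $\Sigma_B(Z)\subset\Pi(b,p_i^{n_i-1})$.
   Context: $A\oplus B=\mathbb{Z}_M$ means every element of $\mathbb{Z}_M$ is uniquely $a+b$ with $a\in A$, $b\in B$. $F_i=\{0,M/p_i,\dots,(p_i-1)M/p_i\}$, $x*F_i=\{x+f:f\in F_i\}$. $\Pi(y,p_i^\alpha)=\{y'\in\mathbb{Z}_M:p_i^\alpha\mid y-y'\}$. For $Z\subset\mathbb{Z}_M$, $\Sigma_A(Z)=\{a\in A: a+b\in Z\text{ for some }b\in B\}$, $\Sigma_B(Z)=\{b\in B: a+b\in Z\text{ for some }a\in A\}$. A fiber $Z=x*F_i$ splits with parity $(A,B)$ if $p_i^{n_i}\mid a-a'$ for all $a,a'\in\Sigma_A(Z)$ and, for all distinct $b,b'\in\Sigma_B(Z)$, $p_i^{n_i-1}\mid b-b'$ but $p_i^{n_i}\nmid b-b'$; parity $(B,A)$ is defined with $A,B$ interchanged. *)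

(* Defs.v *)
(* Z_M is modelled by the ordinals 'I_M (residues 0..M-1),
   with addition (x + y) %% M. *)
From mathcomp Require Import all_ssreflect.
Set Implicit Arguments. Unset Strict Implicit. Unset Printing Implicit Defensive.

Section Defs.
Variable M : nat.

Definition zaddM (x y : 'I_M) : nat := (x + y) %% M.

Definition tiling (A B : {set 'I_M}) : Prop :=
  forall z : 'I_M,
    (exists a b, [/\ a \in A, b \in B & zaddM a b = z]) /\
    (forall a b a' b', a \in A -> b \in B -> a' \in A -> b' \in B ->
       zaddM a b = z -> zaddM a' b' = z -> a = a' /\ b = b').

Definition fiber (x : 'I_M) (p : nat) : {set 'I_M} :=
  [set y : 'I_M | [exists k : 'I_p, (y : nat) == (x + k * (M %/ p)) %% M]].

Definition Pi (y : 'I_M) (q : nat) : {set 'I_M} :=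
  [set y' : 'I_M | (y : nat) == y' %[mod q]].

Definition SigmaA (A B Z : {set 'I_M}) : {set 'I_M} :=
  [set a in A | [exists b in B, [exists z in Z, (z : nat) == zaddM a b]]].
Definition SigmaB (A B Z : {set 'I_M}) : {set 'I_M} :=
  [set b in B | [exists a in A, [exists z in Z, (z : nat) == zaddM a b]]].

Definition splits_with_parity (A B Z : {set 'I_M}) (p n : nat) : Prop :=
  (forall a a', a \in SigmaA A B Z -> a' \in SigmaA A B Z ->
     (a : nat) = a' %[mod p ^ n]) /\
  (forall b b', b \in SigmaB A B Z -> b' \in SigmaB A B Z -> b != b' ->
     (b : nat) = b' %[mod p ^ n.-1] /\ (b : nat) <> b' %[mod p ^ n]).
End Defs.

(* Main.v *)
Require Import Defs.
From mathcomp Require Import all_ssreflect.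
From mathcomp Require Import all_boot all_algebra zify ring.
From Stdlib Require Import Classical.
Set Implicit Arguments. Unset Strict Implicit. Unset Printing Implicit Defensive.

Module SubG.

Lemma card_sum_bool (T : finType) (X : {set T}) (b : T -> bool) :
  #|[set u in X | b u]| = \sum_(u in X) (b u : nat).
Proof.
rewrite -sum1_card -big_mkcondr /=.
by apply: eq_bigl => u; rewrite !inE.
Qed.

Lemma big_setX2 (R : Type) (idx : R) (op : Monoid.com_law idx) (I J : finType)
  (A : {set I}) (B : {set J}) (F : I -> J -> R) :
  \big[op/idx]_(u in setX A B) F u.1 u.2 = \big[op/idx]_(a in A) \big[op/idx]_(b in B) F a b.
Proof. by rewrite pair_big; apply: eq_bigl => u; rewrite inE. Qed.

Lemma sum_count (M : nat) (M0 : 0 < M) (T : finType) (X : {set T}) (e : T -> nat) :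
  \sum_(z < M) #|[set u in X | e u %% M == z]| = #|X|.
Proof.
under eq_bigr => z _ do rewrite card_sum_bool.
rewrite exchange_big /= -sum1_card; apply: eq_bigr => u _.
rewrite (bigD1 (Ordinal (ltn_pmod (e u) M0))) //= eqxx big1 // => j /negP nj.
case E: (_ == _) => //; case: nj; apply/eqP/val_inj => /=; exact/esym/eqP.
Qed.

Lemma all_one (M : nat) (r : 'I_M -> nat) :
  \sum_(z < M) r z = M -> (forall z, 0 < r z) -> forall z, r z = 1.
Proof.
move=> Hs Hp z.
have H1 : \sum_(z < M) r z = \sum_(z < M) 1 + \sum_(z < M) (r z).-1.
  by rewrite -big_split /=; apply: eq_bigr => j _; rewrite add1n prednK.
move: H1; rewrite Hs sum1_card card_ord -[X in X = _]addn0 => /eqP.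
rewrite eqn_add2l eq_sym sum_nat_eq0 => /forallP /(_ z) /implyP /(_ isT) /eqP.
by move: (Hp z); case: (r z) => // -[].
Qed.
Import GRing.Theory.
Local Open Scope ring_scope.
Section Frob.
Variables (M : nat) (M_gt1 : (1 < M)%N) (q : nat) (q_pr : prime q).
Let F := 'F_q.
Let h : {poly F} := 'X^M - 1.
Let R := {poly %/ h}.
Let x : R := in_qpoly h 'X.

Lemma mk_monic_h : mk_monic h = h.
Proof.
rewrite /mk_monic /h size_XnsubC ?(ltnW M_gt1) // ltnS (ltnW M_gt1) /=.
by rewrite monicXnsubC // (ltnW M_gt1).
Qed.

Lemma xXn k : x ^+ k = in_qpoly h 'X^k.
Proof. by rewrite /x -rmorphXn. Qed.

Lemma valx k : (k < M)%N -> polyn (x ^+ k) = 'X^k.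
Proof.
move=> kM; rewrite xXn; apply: in_qpoly_small.
by rewrite mk_monic_h /h size_XnsubC ?(ltnW M_gt1) // size_polyXn ltnS.
Qed.

Lemma xM : x ^+ M = 1.
Proof.
rewrite xXn -[X in in_qpoly h X](subrK 1) in_qpolyD in_qpoly1.
suff -> : in_qpoly h ('X^M - 1) = 0 by rewrite add0r.
apply: val_inj => /=. rewrite /in_qpoly /=.
by rewrite mk_monic_h Pdiv.RingMonic.rmodpp // monicXnsubC // (ltnW M_gt1).
Qed.

Lemma xmod e : x ^+ e = x ^+ (e %% M)%N.
Proof.
by rewrite {1}(divn_eq e M) exprD mulnC exprM xM expr1n mul1r.
Qed.

Lemma coef_sum_x (T : finType) (X : {set T}) (e : T -> nat) (z : nat) :
  (z < M)%N -> (polyn (\sum_(u in X) x ^+ e u))`_z = (#|[set u in X | (e u %% M == z)%N]|)%:R.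
Proof.
move=> zM; rewrite poly_of_qpoly_sum coef_sum card_sum_bool natr_sum.
apply: eq_bigr => u _; rewrite xmod valx ?ltn_pmod ?(ltnW M_gt1) // coefXn.
by rewrite eq_sym.
Qed.

Lemma Xeq (r1 r2 : R) : (forall z, (z < M)%N -> (val r1)`_z = (val r2)`_z) -> r1 = r2.
Proof.
move=> H; apply: val_inj; apply/polyP => z; case: (ltnP z M) => zM; first exact: H.
have sz (r : R) : (size (val r) <= M)%N.
  apply: leq_trans (size_npoly r) _.
  by rewrite mk_monic_h /h size_XnsubC ?(ltnW M_gt1).
by rewrite !nth_default // (leq_trans (sz _)).
Qed.

Let S : R := \sum_(k < M) x ^+ k.

Lemma xS : x * S = S.
Proof.
rewrite /S mulr_sumr.
case: M M_gt1 xM => // m _ xm.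
rewrite big_ord_recr big_ord_recl /= -exprS xm expr0 addrC; congr (_ + _).
by apply: eq_bigr => i _; rewrite -exprS.
Qed.

Lemma xeS e : x ^+ e * S = S.
Proof. by elim: e => [|e IH]; rewrite ?expr0 ?mul1r // exprS -mulrA IH xS. Qed.


Lemma coefS z : (z < M)%N -> (polyn S)`_z = 1.
Proof.
move=> zM; rewrite /S poly_of_qpoly_sum coef_sum (bigD1 (Ordinal zM)) //=.
rewrite valx // coefXn eqxx big1 ?addr0 // => k nk.
rewrite valx // coefXn; case: eqP => // ek; case/eqP: nk; exact: val_inj.
Qed.

Lemma frob_step (A B : {set 'I_M}) (g : 'I_M -> nat) :
  ~~ (q %| M)%N ->
  (forall z : 'I_M, #|[set u in setX A B | ((g u.1 + u.2) %% M == z)%N]| = 1%N) ->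
  forall z : 'I_M, #|[set u in setX A B | ((q * g u.1 + u.2) %% M == z)%N]| = 1%N.
Proof.
move=> qM H.
have M0 : (0 < M)%N by exact: ltnW.
have cAB : (#|A| * #|B| = M)%N.
  rewrite -cardsX -(sum_count M0 _ (fun u : ('I_M * 'I_M)%type => g u.1 + u.2)%N).
  under eq_bigr => z _ do rewrite H.
  by rewrite sum1_card card_ord.
have qA : ~~ (q %| #|A|)%N.
  apply: contra qM => /dvdn_trans; apply; apply/dvdnP; exists #|B|; by rewrite mulnC cAB.
pose Ga : R := \sum_(a in A) x ^+ g a.
pose Bp : R := \sum_(b in B) x ^+ b.
have GB : Ga * Bp = S.
  have -> : Ga * Bp = \sum_(u in setX A B) x ^+ (g u.1 + u.2)%N.
    rewrite mulr_suml (big_setX2 _ _ _ (fun a (b : 'I_M) => x ^+ (g a + b)%N)) /=; apply: eq_bigr => a _.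
    by rewrite mulr_sumr; apply: eq_bigr => b _; rewrite exprD.
  apply: Xeq => z zM; rewrite coef_sum_x // coefS //.
  by have := H (Ordinal zM); rewrite /= => ->.
have GS : Ga * S = #|A|%:R * S.
  rewrite mulr_suml; under eq_bigr => a _ do rewrite xeS.
  by rewrite sumr_const mulr_natl.
have GjS j : Ga ^+ j * S = (#|A| ^ j)%N%:R * S.
  elim: j => [|j IH]; first by rewrite expr0 expn0 !mul1r.
  by rewrite exprS -mulrA IH mulrCA GS mulrA -natrM expnS mulnC.
have chR : q \in [pchar R] by rewrite pchar_qpoly pchar_Fp.
have Frob : Ga ^+ q = \sum_(a in A) x ^+ (q * g a)%N.
  rewrite -(pFrobenius_autE chR) rmorph_sum; apply: eq_bigr => a _.
  by rewrite -mulnC exprM; apply: pFrobenius_autE.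
have key : (\sum_(u in setX A B) x ^+ (q * g u.1 + u.2)%N) = (#|A| ^ q.-1)%N%:R * S.
  transitivity (Ga ^+ q * Bp).
    rewrite Frob mulr_suml (big_setX2 _ _ _ (fun a (b : 'I_M) => x ^+ (q * g a + b)%N)) /=; apply: eq_bigr => a _.
    by rewrite mulr_sumr; apply: eq_bigr => b _; rewrite exprD.
  have qS : q = q.-1.+1 by rewrite prednK // prime_gt0.
  have -> : Ga ^+ q = Ga ^+ q.-1 * Ga by rewrite -exprSr prednK // prime_gt0.
  by rewrite -mulrA GB GjS.
apply: (all_one (r := fun z : 'I_M => #|[set u in setX A B | ((q * g u.1 + u.2) %% M == z)%N]|)).
  by rewrite sum_count // cardsX.
move=> z; rewrite lt0n; apply/negP => /eqP c0.
have E := coef_sum_x (setX A B) (fun u : ('I_M * 'I_M)%type => q * g u.1 + u.2)%N (ltn_ord z).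
rewrite key c0 mulr_natl raddfMn coefMn coefS // in E.
move/eqP: E; rewrite -(dvdn_pcharf (pchar_Fp q_pr)).
by rewrite Euclid_dvdX // (negPf qA).
Qed.

End Frob.

End SubG.
Import SubG.

Module SubN.
Import GRing.Theory Num.Theory.
Local Open Scope ring_scope.

Lemma nat_dvdz (d m n : nat) : (m %% d = n %% d)%N -> (d%:Z %| m%:Z - n%:Z)%Z.
Proof. by move=> e; rewrite -eqz_mod_dvd !modz_nat e. Qed.

Lemma dvdz_nat_mod (d m n : nat) : (d%:Z %| m%:Z - n%:Z)%Z -> (m %% d = n %% d)%N.
Proof. by rewrite -eqz_mod_dvd !modz_nat => /eqP [->]. Qed.

Lemma dvdz_small (p k l : nat) : (k < p)%N -> (l < p)%N -> (p%:Z %| k%:Z - l%:Z)%Z -> k = l.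
Proof.
move=> kp lp /dvdzP [m hm].
have : (m = 0) \/ (1 <= m) \/ (m <= -1) by lia.
case=> [m0|[m1|m1]]; first by move: hm; rewrite m0 mul0r; lia.
  have : (p%:Z <= m * p%:Z) by rewrite ler_pMl //; lia.
  lia.
have : (m * p%:Z <= - p%:Z) by rewrite -mulN1r ler_pM2r //; lia.
lia.
Qed.

Lemma core_t (p n M' : nat) (D E c : int) :
  prime p -> (0 < n)%N -> (0 < M')%N ->
  ~~ (p%:Z %| c)%Z ->
  ((p ^ n * M')%N%:Z %| D + E - c * (p ^ n.-1 * M')%N%:Z)%Z ->
  ~~ ((p ^ n)%N%:Z %| D)%Z -> ~~ ((p ^ n)%N%:Z %| E)%Z ->
  exists t : nat, coprime t (p ^ n * M') /\ ((p ^ n * M')%N%:Z %| t%:Z * D + E)%Z.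
Proof.
move=> pp n0 M'0 pc hyp PD PE.
set P := (p ^ n)%N in hyp PD PE *; set M := (P * M')%N in hyp *.
have P0 : (0 < P)%N by rewrite expn_gt0 prime_gt0.
have M0 : (0 < M)%N by rewrite muln_gt0 P0.
pose g := gcdn `|D| P.
have : (g %| p ^ n)%N by exact: dvdn_gcdr.
case/(dvdn_pfactor _ _ pp) => v vn gE.
have vn1 : (v <= n.-1)%N.
  rewrite -ltnS prednK // ltn_neqAle vn andbT; apply/eqP => vE.
  case/negP: PD; rewrite dvdzE absz_nat.
  by rewrite /P -vE -gE /g dvdn_gcdl.
have [u0 [w0 Bez]] := Bezoutz D P%:Z.
rewrite /gcdz absz_nat -/g in Bez.
pose h := (p ^ (n.-1 - v))%N.
have gh : (g * h = p ^ n.-1)%N by rewrite gE -expnD subnKC.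
pose s := - (c * h%:Z * u0).
pose t0 := 1 + s * M'%:Z.
pose t := `| (t0 %% M%:Z)%Z |%N.
have tE : t%:Z = (t0 %% M%:Z)%Z by rewrite gez0_abs // modz_ge0 // lt0n_neq0.
have Mtt0 : (M%:Z %| t%:Z - t0)%Z.
  rewrite tE; apply/dvdzP; exists (- (t0 %/ M%:Z)%Z).
  by rewrite {2}(divz_eq t0 M%:Z); ring.
have claim1 : (M%:Z %| t0 * D + E)%Z.
  have -> : t0 * D + E = (D + E - c * (p ^ n.-1 * M')%N%:Z) + (c * h%:Z * w0 * M'%:Z) * P%:Z.
    rewrite -gh PoszM PoszM -Bez /t0 /s /M; ring.
  case/dvdzP: hyp => k hk; apply/dvdzP; exists (k + c * h%:Z * w0); rewrite hk /M PoszM; ring.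
have claim2 : (M%:Z %| t%:Z * D + E)%Z.
  case/dvdzP: Mtt0 => k1 hk1; case/dvdzP: claim1 => k2 hk2; apply/dvdzP.
  exists (k1 * D + k2).
  have -> : t%:Z * D + E = (t%:Z - t0) * D + (t0 * D + E) by ring.
  by rewrite hk1 hk2; ring.
have PE' : P = (p * p ^ n.-1)%N by rewrite -expnS prednK.
exists t; split => //.
rewrite /M coprimeMr; apply/andP; split.
  rewrite /P coprime_pexpr // coprime_sym prime_coprime //.
  apply/negP => /dvdnP [kt hkt].
  case/dvdzP: Mtt0 => k1 hk1.
  case: (ltnP v n.-1) => [vlt|vge].
    have hE : h = (p * p ^ (n.-1 - v).-1)%N by rewrite -expnS prednK // subn_gt0.
    have : (p%:Z %| 1)%Z.
      apply/dvdzP.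
      exists (kt%:Z - k1 * (p ^ n.-1)%N%:Z * M'%:Z + c * (p ^ (n.-1 - v).-1)%N%:Z * u0 * M'%:Z).
      transitivity (t%:Z - (t%:Z - t0) - s * M'%:Z); first by rewrite /t0; ring.
      rewrite hk1 hkt /s /M PE' hE !PoszM; ring.
    by rewrite dvdz1 absz_nat => /eqP p1; move: pp; rewrite p1.
  have vE : v = n.-1 by apply/eqP; rewrite eqn_leq vn1 vge.
  have : (g %| `|D|)%N by exact: dvdn_gcdl.
  rewrite gE vE => /dvdnP [kd hkd].
  have [sD hD] : exists sD, D = sD * (kd * p ^ n.-1)%N%:Z.
    by exists (sgz D); rewrite -hkd -intEsg.
  case/negP: PE; case/dvdzP: claim2 => k2 hk2; apply/dvdzP.
  exists (k2 * M'%:Z - kt%:Z * sD * kd%:Z).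
  have -> : E = (t%:Z * D + E) - t%:Z * D by ring.
  rewrite hk2 hD hkt /M PE' !PoszM; ring.
rewrite -coprime_modl.
have -> : (t %% M' = 1 %% M')%N.
  apply: dvdz_nat_mod; case/dvdzP: Mtt0 => k1 hk1; apply/dvdzP.
  exists (k1 * P%:Z + s).
  have -> : t%:Z - 1 = (t%:Z - t0) + s * M'%:Z by rewrite /t0; ring.
  by rewrite hk1 /M PoszM; ring.
by rewrite coprime_modl coprime1n.
Qed.

End SubN.
Import SubN.

Module SubT.

Lemma tij (M : nat) (M_gt1 : 1 < M) (A B : {set 'I_M}) :
  (forall z : 'I_M, #|[set u in setX A B | (u.1 + u.2) %% M == z]| = 1) ->
  forall t, coprime t M ->
  forall z : 'I_M, #|[set u in setX A B | (t * u.1 + u.2) %% M == z]| = 1.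
Proof.
move=> H t; elim/ltn_ind: t => t IH.
case: t IH => [|[|t]] IH ct.
- by move: ct; rewrite /coprime gcd0n => /eqP M1; rewrite M1 in M_gt1.
- move=> z; rewrite -[RHS](H z); apply: eq_card => u.
  by rewrite !inE mul1n.
set t' := t.+2 in IH ct *.
have pq : prime (pdiv t') by apply: pdiv_prime.
have tE : t' = pdiv t' * (t' %/ pdiv t') by rewrite mulnC divnK // pdiv_dvd.
have ct' : coprime (t' %/ pdiv t') M.
  by apply: coprime_dvdl ct; apply/dvdnP; exists (pdiv t'); rewrite mulnC divnK // pdiv_dvd.
have lt : t' %/ pdiv t' < t' by rewrite ltn_Pdiv // prime_gt1.
have qM : ~~ (pdiv t' %| M).
  apply/negP => qM; have : pdiv t' %| gcdn t' M by rewrite dvdn_gcd pdiv_dvd qM.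
  by rewrite (eqP ct) dvdn1 => /eqP q1; move: pq; rewrite q1.
move=> z; have := frob_step M_gt1 pq (g := fun a => t' %/ pdiv t' * a) qM (IH _ lt ct') z.
move=> <-; apply: eq_card => u.
by rewrite !inE mulnA -tE.
Qed.

End SubT.
Import SubT.

Module SubP.
Import GRing.Theory Num.Theory.

Lemma mod_dvd_weak (d d' m n : nat) : d' %| d -> m %% d = n %% d -> m %% d' = n %% d'.
Proof. by move=> dd e; rewrite -(modn_dvdm m dd) e modn_dvdm. Qed.

Section Pair.
Variables (M pi ni M' : nat) (x : nat).
Hypotheses (ppr : prime pi) (ni0 : 0 < ni) (cp : coprime pi M') (hM : M = pi ^ ni * M').
Variables (A B : {set 'I_M}).
Hypothesis hAB : tiling A B.
Let P := pi ^ ni.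
Let P' := pi ^ ni.-1.
Let Mp := (P' * M')%N.

Definition cfg (a b : 'I_M) k :=
  [/\ a \in A, b \in B, k < pi & (a + b) %% M = (x + k * Mp) %% M].

Lemma M'0 : 0 < M'.
Proof. by move: cp; case: (M') => //; rewrite /coprime gcdn0 => /eqP p1; move: ppr; rewrite p1. Qed.

Lemma M_gt1 : 1 < M.
Proof.
rewrite hM; apply: (@leq_trans pi); first exact: prime_gt1.
apply: (@leq_trans (pi ^ ni)); last by rewrite leq_pmulr // M'0.
by rewrite -{1}(expn1 pi) leq_pexp2l // prime_gt0.
Qed.

Lemma M0 : 0 < M.
Proof. exact: ltnW M_gt1. Qed.

Lemma PP' : P = (P' * pi)%N.
Proof. by rewrite /P /P' -expnSr prednK. Qed.

Lemma uniq_t (a a' b b' : 'I_M) : a \in A -> a' \in A -> b \in B -> b' \in B ->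
  (a + b) %% M = (a' + b') %% M -> a = a' /\ b = b'.
Proof.
move=> aA a'A bB b'B e.
have [_ U] := hAB (Ordinal (ltn_pmod (a + b) M0)).
by apply: U => //; rewrite /zaddM /= e.
Qed.

Lemma H0 (z : 'I_M) : #|[set u in setX A B | (u.1 + u.2) %% M == z]| = 1.
Proof.
have [[a [b [aA bB e]]] U] := hAB z.
apply/eqP/cards1P; exists (a, b); apply/setP => -[a' b']; rewrite !inE /=.
apply/idP/idP.
  case/andP => /andP [a'A b'B] /eqP e'.
  by have [-> ->] := U a' b' a b a'A b'B aA bB e' e.
by case/eqP => -> ->; rewrite aA bB /= -e.
Qed.

Lemma sumdiv (a b a' b' : 'I_M) k l : cfg a b k -> cfg a' b' l ->
  (M%:Z %| ((a%:Z - a'%:Z) + (b%:Z - b'%:Z) - (k%:Z - l%:Z) * Mp%:Z)%R)%Z.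
Proof.
case=> _ _ _ e1 [_ _ _ e2].
case/dvdzP: (nat_dvdz e1) => w1 h1; case/dvdzP: (nat_dvdz e2) => w2 h2.
apply/dvdzP; exists (w1 - w2)%R.
rewrite !PoszD !PoszM in h1 h2.
transitivity ((a%:Z + b%:Z - (x%:Z + k%:Z * Mp%:Z)) - (a'%:Z + b'%:Z - (x%:Z + l%:Z * Mp%:Z)))%R.
  by ring.
by rewrite h1 h2; ring.
Qed.


Lemma not_pc (k l : nat) : k < pi -> l < pi -> k != l -> ~~ (pi%:Z %| (k%:Z - l%:Z)%R)%Z.
Proof. by move=> kp lp kl; apply/negP => /(dvdz_small kp lp) /eqP; apply/negP. Qed.

Lemma F1 (a b a' b' : 'I_M) k l : cfg a b k -> cfg a' b' l ->
  a %% P = a' %% P \/ b %% P = b' %% P.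
Proof.
move=> c1 c2; have sd := sumdiv c1 c2.
case: c1 c2 => aA bB kp e1 [a'A b'B lp e2].
case: (eqVneq (a %% P) (a' %% P)) => [|nA]; [by left|].
case: (eqVneq (b %% P) (b' %% P)) => [|nB]; [by right|].
exfalso.
case: (eqVneq k l) => [kl|kl].
  subst l; have [aa _] := uniq_t aA a'A bB b'B (etrans e1 (esym e2)).
  by move: nA; rewrite aa eqxx.
have hyp : ((pi ^ ni * M')%N%:Z %| ((a%:Z - a'%:Z) + (b%:Z - b'%:Z) - (k%:Z - l%:Z) * (pi ^ ni.-1 * M')%N%:Z)%R)%Z.
  by rewrite -hM.
have PD : ~~ ((pi ^ ni)%N%:Z %| (a%:Z - a'%:Z)%R)%Z.
  by apply/negP => /dvdz_nat_mod; apply/eqP.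
have PE : ~~ ((pi ^ ni)%N%:Z %| (b%:Z - b'%:Z)%R)%Z.
  by apply/negP => /dvdz_nat_mod; apply/eqP.
have [t [ct dv]] := core_t ppr ni0 M'0 (not_pc kp lp kl) hyp PD PE.
rewrite -hM in ct dv.
have := tij M_gt1 H0 ct (Ordinal (ltn_pmod (t * a + b) M0)).
move/eqP/cards1P => [w hw].
have m1 : (a, b) \in [set u in setX A B | (t * u.1 + u.2) %% M == Ordinal (ltn_pmod (t * a + b) M0)].
  by rewrite !inE /= aA bB eqxx.
have m2 : (a', b') \in [set u in setX A B | (t * u.1 + u.2) %% M == Ordinal (ltn_pmod (t * a + b) M0)].
  rewrite !inE /= a'A b'B /=; apply/eqP; apply: dvdz_nat_mod.
  case/dvdzP: dv => w0 h0; apply/dvdzP; exists (- w0)%R.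
  rewrite !PoszD !PoszM; transitivity (- (t%:Z * (a%:Z - a'%:Z) + (b%:Z - b'%:Z)))%R.
    by ring.
  by rewrite h0; ring.
rewrite hw !inE in m1 m2.
by move: nA; rewrite -(eqP m2) in m1; case/eqP: m1 => ->; rewrite eqxx.
Qed.


Lemma F2 (a b a' b' : 'I_M) k l : cfg a b k -> cfg a' b' l ->
  a %% P = a' %% P -> b %% P = b' %% P -> a = a' /\ b = b'.
Proof.
move=> c1 c2 eA eB; have sd := sumdiv c1 c2.
case: c1 c2 => aA bB kp e1 [a'A b'B lp e2].
case: (eqVneq k l) => [kl|kl].
  by subst l; apply: uniq_t aA a'A bB b'B (etrans e1 (esym e2)).
exfalso; move: (not_pc kp lp kl); apply/negP; rewrite negbK.
case/dvdzP: (nat_dvdz eA) => wD hD; case/dvdzP: (nat_dvdz eB) => wE hE.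
case/dvdzP: sd => w hS.
have cp' : coprimez pi%:Z M'%:Z by [].
rewrite -(Gauss_dvdzl _ cp'); apply/dvdzP; exists (wD + wE - w * M'%:Z)%R.
have P'0 : (P'%:Z != 0)%R.
  by rewrite /P' eqz_nat expn_eq0 negb_and -lt0n prime_gt0.
apply: (mulIf P'0).
transitivity ((k%:Z - l%:Z) * Mp%:Z)%R; first by rewrite /Mp PoszM; ring.
have -> : ((k%:Z - l%:Z) * Mp%:Z = (a%:Z - a'%:Z) + (b%:Z - b'%:Z) - w * M%:Z)%R.
  by rewrite -hS; ring.
by rewrite hD hE hM PoszM -/P PP' PoszM; ring.
Qed.

Lemma F3 (a b a' b' : 'I_M) k l : cfg a b k -> cfg a' b' l ->
  (a %% P' = a' %% P') <-> (b %% P' = b' %% P').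
Proof.
move=> c1 c2; have sd := sumdiv c1 c2.
case/dvdzP: sd => w hS.
  have hDE : (P'%:Z %| ((a%:Z - a'%:Z) + (b%:Z - b'%:Z))%R)%Z.
  apply/dvdzP; exists (w * (pi * M')%N%:Z + (k%:Z - l%:Z) * M'%:Z)%R.
  transitivity (((a%:Z - a'%:Z) + (b%:Z - b'%:Z) - (k%:Z - l%:Z) * Mp%:Z) + (k%:Z - l%:Z) * Mp%:Z)%R.
    by ring.
  by rewrite hS hM /Mp -/P PP' !PoszM; ring.
case/dvdzP: hDE => v hv.
split=> e.
  apply: dvdz_nat_mod; case/dvdzP: (nat_dvdz e) => u hu; apply/dvdzP; exists (v - u)%R.
  by rewrite mulrBl -hu -hv; ring.
apply: dvdz_nat_mod; case/dvdzP: (nat_dvdz e) => u hu; apply/dvdzP; exists (v - u)%R.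
by rewrite mulrBl -hu -hv; ring.
Qed.

End Pair.

End SubP.
Import SubP.


Theorem lemma4p3 (K : nat) (p n : 'I_K -> nat) (M : nat)
  (hp : forall nu, prime (p nu)) (hinj : injective p)
  (hn : forall nu, 0 < n nu)
  (hM : M = \prod_(nu < K) p nu ^ n nu)
  (A B : {set 'I_M}) (hAB : tiling A B)
  (x : 'I_M) (i : 'I_K) :
  let Z := fiber x (p i) in
  (splits_with_parity A B Z (p i) (n i) \/
   splits_with_parity B A Z (p i) (n i)) /\
  (forall a b, a \in SigmaA A B Z -> b \in SigmaB A B Z ->
     SigmaA A B Z \subset Pi a (p i ^ (n i).-1) /\
     SigmaB A B Z \subset Pi b (p i ^ (n i).-1)).
Proof.
move=> Z.
have ppr : prime (p i) := hp i.
have ni0 : 0 < n i := hn i.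
pose M' := \prod_(nu < K | nu != i) p nu ^ n nu.
have hM' : M = p i ^ n i * M' by rewrite hM (bigD1 i).
have cp : coprime (p i) M'.
  rewrite /M'; apply: (big_ind (fun m => coprime (p i) m)); first exact: coprimen1.
    by move=> u v cu cv; rewrite coprimeMr cu cv.
  move=> nu nui; apply: coprimeXr; rewrite prime_coprime // dvdn_prime2 //.
  by apply/negP => /eqP /hinj e; move: nui; rewrite e eqxx.
have Mp : M %/ p i = (p i ^ (n i).-1 * M')%N.
  by rewrite hM' -{1}(prednK ni0) expnS -mulnA mulKn // prime_gt0.
set P := p i ^ n i.
set P' := p i ^ (n i).-1.
have P'P : P' %| P by rewrite dvdn_exp2l // leq_pred.
pose cf := cfg (p i) (n i) M' x A B.
have SA a : a \in SigmaA A B Z -> exists b k, cf a b k.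
  rewrite inE => /andP [aA /existsP [b /andP [bB /existsP [z /andP [zZ /eqP ez]]]]].
  move: zZ; rewrite inE => /existsP [k /eqP ek].
  exists b, k; split => //; rewrite -Mp -ek.
  by rewrite ez.
have SB b : b \in SigmaB A B Z -> exists a k, cf a b k.
  rewrite inE => /andP [bB /existsP [a /andP [aA /existsP [z /andP [zZ /eqP ez]]]]].
  move: zZ; rewrite inE => /existsP [k /eqP ek].
  exists a, k; split => //; rewrite -Mp -ek.
  by rewrite ez.
have F1' := @F1 _ _ _ _ x ppr ni0 cp hM' _ _ hAB.
have F2' := @F2 _ _ _ _ x ppr ni0 cp hM' _ _ hAB.
have F3' := @F3 _ _ _ _ x ni0 hM' A B.
have claim : (forall a b k a' b' l, cf a b k -> cf a' b' l -> a %% P = a' %% P) \/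
             (forall a b k a' b' l, cf a b k -> cf a' b' l -> b %% P = b' %% P).
  case: (classic (exists a1 b1 k1 a2 b2 k2, [/\ cf a1 b1 k1, cf a2 b2 k2 & a1 %% P <> a2 %% P])) => hx.
    right; case: hx => a1 [b1 [k1 [a2 [b2 [k2 [c1 c2 ne]]]]]].
    have b12 : b1 %% P = b2 %% P by case: (F1' _ _ _ _ _ _ c1 c2).
    have key a3 b3 k3 : cf a3 b3 k3 -> b3 %% P = b1 %% P.
      move=> c3; case: (eqVneq (a3 %% P) (a1 %% P)) => e.
        case: (F1' _ _ _ _ _ _ c3 c2) => [e2|->] //.
        by case: ne; rewrite -e e2.
      case: (F1' _ _ _ _ _ _ c3 c1) => [e1|//].
      by rewrite e1 eqxx in e.
    by move=> a b k a' b' l c c'; rewrite (key _ _ _ c) (key _ _ _ c').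
  left => a b k a' b' l c c'; case: (eqVneq (a %% P) (a' %% P)) => // ne.
  by case: hx; exists a, b, k, a', b', l; split => //; apply/eqP.
have SAB : SigmaA B A Z = SigmaB A B Z.
  apply/setP => y; rewrite !inE; congr (_ && _); apply: eq_existsb => a.
  congr (_ && _); apply: eq_existsb => z; by rewrite /zaddM addnC.
have SBA : SigmaB B A Z = SigmaA A B Z.
  apply/setP => y; rewrite !inE; congr (_ && _); apply: eq_existsb => a.
  congr (_ && _); apply: eq_existsb => z; by rewrite /zaddM addnC.
split.
  case: claim => [hA|hB]; [left|right].
    split.
      by move=> a a' /SA [b [k c1]] /SA [b' [l c2]]; exact: hA c1 c2.
    move=> b b' /SB [a [k c1]] /SB [a' [l c2]] nb; split.
      by apply/(F3' _ _ _ _ _ _ c1 c2); apply: mod_dvd_weak P'P (hA _ _ _ _ _ _ c1 c2).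
    move=> eb; have [_ bb] := F2' _ _ _ _ _ _ c1 c2 (hA _ _ _ _ _ _ c1 c2) eb.
    by rewrite bb eqxx in nb.
  rewrite /splits_with_parity SAB SBA; split.
    by move=> b b' /SB [a [k c1]] /SB [a' [l c2]]; exact: hB c1 c2.
  move=> a a' /SA [b [k c1]] /SA [b' [l c2]] na; split.
    by apply/(F3' _ _ _ _ _ _ c1 c2); apply: mod_dvd_weak P'P (hB _ _ _ _ _ _ c1 c2).
  move=> ea; have [aa _] := F2' _ _ _ _ _ _ c1 c2 ea (hB _ _ _ _ _ _ c1 c2).
  by rewrite aa eqxx in na.
move=> a b /SA [b0 [k c1]] /SB [a0 [l c2]]; split; apply/subsetP => y.
  move=> /SA [bY [ky cy]]; rewrite inE; apply/eqP.
  case: (F1' _ _ _ _ _ _ c1 cy) => e; first exact: mod_dvd_weak P'P e.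
  by apply/(F3' _ _ _ _ _ _ c1 cy); apply: mod_dvd_weak P'P e.
move=> /SB [ay [ky cy]]; rewrite inE; apply/eqP.
case: (F1' _ _ _ _ _ _ c2 cy) => e; last exact: mod_dvd_weak P'P e.
by apply/(F3' _ _ _ _ _ _ c2 cy); apply: mod_dvd_weak P'P e.
Qed.
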